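(* The function $$f(x,y)=\frac{(x+1)\log(x+y)}{(x+y)\big(\log(x+y)-\log y\big)},\qquad x>0,\ y\in\mathbb N_+,$$ is monotonically increasing in $y$ for every fixed $x>0$, and monotonically decreasing in $x$ for every fixed positive integer $y$.
   Context: $\log$ denotes the natural logarithm and $\mathbb N_+=\{1,2,3,\dots\}$. *)

(* Defs.v *)
From Stdlib Require Import Reals.
Open Scope R_scope.
Definition fxy (x y : R) : R :=
  (x + 1) * ln (x + y) / ((x + y) * (ln (x + y) - ln y)).

(* Main.v *)
Require Import Defs.
From Stdlib Require Import Reals.
From Coquelicot Require Import Coquelicot.
From Stdlib Require Import Lra Psatz.
Open Scope R_scope.

Lemma mono (f df : R -> R) a b : a <= b ->
  (forall x, a <= x <= b -> is_derive f x (df x)) ->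
  (forall x, a <= x <= b -> 0 <= df x) -> f a <= f b.
Proof.
  intros hab hd hp.
  destruct (MVT_gen f a b df) as [c [hc e]].
  - intros x hx. rewrite Rmin_left in hx by lra. rewrite Rmax_right in hx by lra.
    apply hd; lra.
  - intros x hx. rewrite Rmin_left in hx by lra. rewrite Rmax_right in hx by lra.
    apply continuity_pt_filterlim. apply (@ex_derive_continuous R_AbsRing R_NormedModule).
    eexists. apply hd; lra.
  - rewrite Rmin_left in hc by lra. rewrite Rmax_right in hc by lra.
    assert (0 <= df c) by (apply hp; lra).
    assert (0 <= df c * (b - a)) by (apply Rmult_le_pos; lra). lra.
Qed.

Lemma exp1 s : 0 <= s -> 1 + s <= exp s.
Proof. intros h. destruct (Req_dec s 0) as [->|n]. rewrite exp_0; lra.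
  left. apply exp_ineq1; auto. Qed.

Lemma exp2 s : 0 <= s -> 1 + s + s^2/2 <= exp s.
Proof. intros h.
  assert (H := mono (fun s => exp s - (1 + s + s^2/2)) (fun s => exp s - (1 + s)) 0 s h).
  cbv beta in H. rewrite exp_0 in H. cut (0 <= exp s - (1 + s + s^2/2)). lra.
  replace 0 with (1 - (1 + 0 + 0 * (0 * 1) / 2)) by lra. apply H.
  - intros x _. auto_derive; auto. field.
  - intros x hx. pose proof (exp1 x). lra.
Qed.

Lemma exp3 s : 0 <= s -> 1 + s + s^2/2 + s^3/6 <= exp s.
Proof. intros h.
  assert (H := mono (fun s => exp s - (1 + s + s^2/2 + s^3/6)) (fun s => exp s - (1 + s + s^2/2)) 0 s h).
  cbv beta in H. rewrite exp_0 in H. cut (0 <= exp s - (1 + s + s^2/2 + s^3/6)). lra.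
  replace 0 with (1 - (1 + 0 + 0 * (0 * 1) / 2 + 0 * (0 * (0 * 1)) / 6)) by lra. apply H.
  - intros x _. auto_derive; auto. field.
  - intros x hx. pose proof (exp2 x). lra.
Qed.

Lemma lnlow y : 1 <= y -> 2 * (y - 1) / (y + 1) <= ln y.
Proof. intros h.
  assert (H := mono (fun y => ln y - 2 * (y - 1) / (y + 1)) (fun y => / y - 4 / (y+1)^2) 1 y h).
  cbv beta in H. rewrite ln_1 in H. cut (0 <= ln y - 2 * (y - 1) / (y + 1)). lra.
  replace 0 with (0 - 2 * (1 - 1) / (1 + 1)) by field. apply H.
  - intros x hx. auto_derive. repeat split; lra. field. lra.
  - intros x hx. replace (/ x - 4 / (x + 1) ^ 2) with ((x-1)^2/(x*(x+1)^2)) by (field; lra).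
    apply Rle_mult_inv_pos. nra. apply Rmult_lt_0_compat; nra.
Qed.
Lemma spos x y : 0 < x -> 0 < y -> 0 < ln (x+y) - ln y.
Proof. intros. assert (ln y < ln (x+y)) by (apply ln_increasing; lra). lra. Qed.

Lemma dy x y : 0 < x -> 0 < y -> is_derive (fun y => fxy x y) y
  ((x+1) * ((ln (x+y) - ln y) - ln (x+y) * ((ln (x+y) - ln y) + 1 - (x+y)/y))
    / ((x+y)*(ln (x+y) - ln y))^2).
Proof. intros hx hy. pose proof (spos x y hx hy). unfold fxy.
  auto_derive. repeat split; try lra. apply Rgt_not_eq. apply Rmult_lt_0_compat; lra.
  field. repeat split; lra.
Qed.

Lemma dx x y : 0 < x -> 0 < y -> is_derive (fun x => fxy x y) x
  ((ln (x+y) * (ln (x+y) - ln y) * (y - 1) - (x+1) * ln y)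
    / ((x+y)*(ln (x+y) - ln y))^2).
Proof. intros hx hy. pose proof (spos x y hx hy). unfold fxy.
  auto_derive. repeat split; try lra. apply Rgt_not_eq. apply Rmult_lt_0_compat; lra.
  field. repeat split; lra.
Qed.

Lemma expS x y : 0 < x -> 0 < y -> exp (ln (x+y) - ln y) * y = x + y.
Proof. intros. rewrite <- ln_div by lra. rewrite exp_ln. field; lra.
  apply Rdiv_lt_0_compat; lra. Qed.

Lemma key2 x y : 0 < x -> 1 <= y ->
  ln (x+y) * (ln (x+y) - ln y) * (y - 1) <= (x+1) * ln y.
Proof. intros hx hy.
  pose proof (spos x y hx ltac:(lra)) as hs.
  pose proof (expS x y hx ltac:(lra)) as he.
  set (s := ln (x+y) - ln y) in *.
  set (a := ln y) in *.
  assert (hL : ln (x+y) = a + s) by (unfold s; ring). rewrite hL.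
  pose proof (exp3 s ltac:(lra)) as h3.
  pose proof (lnlow y hy) as hb. fold a in hb.
  set (b := 2 * (y - 1) / (y + 1)) in *.
  set (P := 1 + s + y * s^2/2 + y * s^3/6).
  assert (h1 : P <= x + 1 - (y-1)*s).
  { unfold P. assert (y * (1 + s + s^2/2 + s^3/6) <= x + y) by nra. nra. }
  assert (ha : 0 <= a) by (unfold a; rewrite <- ln_1; apply ln_le; lra).
  assert (hP : 0 <= P) by (unfold P; assert (0 <= s^2) by nra; assert (0<= s^3) by (simpl; nra); nra).
  assert (h2 : b * P <= a * (x + 1 - (y-1)*s)) by nra.
  assert (h4 : (y-1)*s^2 <= b * P).
  { assert (e : b * P = (y-1) / (y+1) * (2 * P)) by (unfold b; field; lra). rewrite e.
    assert (q : (y+1) * s^2 <= 2 * P).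
    { unfold P. assert (0 <= 2 + 2*s + s^3/3 - s^2) by (assert (0 <= s * (s - 3/2)^2) by (apply Rmult_le_pos; [lra | apply pow2_ge_0]); replace (2 + 2*s + s^3/3 - s^2) with (s * (s - 3/2)^2 / 3 + 5/4*s + 2) by field; lra).
      assert (0 <= (y-1)*s^3) by (apply Rmult_le_pos; [lra | apply pow_le; lra]). nra. }
    replace ((y-1)*s^2) with ((y-1)/(y+1) * ((y+1)*s^2)) by (field; lra).
    apply Rmult_le_compat_l; auto. apply Rdiv_le_0_compat; lra. }
  nra.
Qed.

Theorem lemma5 :
  (forall (x : R) (m n : nat), 0 < x -> (1 <= m)%nat -> (m <= n)%nat ->
     fxy x (INR m) <= fxy x (INR n)) /\
  (forall (y : nat) (x1 x2 : R), (1 <= y)%nat -> 0 < x1 -> x1 <= x2 ->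
     fxy x2 (INR y) <= fxy x1 (INR y)).
Proof.
  split.
  - intros x m n hx hm hmn.
    assert (h1 : 1 <= INR m) by (apply (le_INR 1); auto).
    assert (h2 : INR m <= INR n) by (apply le_INR; auto).
    eapply (mono (fun y => fxy x y) _ (INR m) (INR n) h2).
    + intros y hy. apply dy; lra.
    + intros y hy. pose proof (spos x y hx ltac:(lra)) as hs.
      pose proof (expS x y hx ltac:(lra)) as he.
      set (s := ln (x+y) - ln y) in *.
      assert (hL : 0 <= ln (x+y)) by (rewrite <- ln_1; apply ln_le; lra).
      pose proof (exp1 s ltac:(lra)).
      assert (q : s + 1 - (x+y)/y <= 0).
      { rewrite <- he. replace (exp s * y / y) with (exp s) by (field; lra). lra. }
      assert (0 <= ln (x+y) * ((x+y)/y - (s+1))) by (apply Rmult_le_pos; lra).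
      unfold s in *.
      apply Rdiv_le_0_compat.
      * apply Rmult_le_pos; [lra|]. nra.
      * apply pow2_gt_0. apply Rgt_not_eq. apply Rmult_lt_0_compat; lra.
  - intros y x1 x2 hy hx1 hx12.
    assert (h1 : 1 <= INR y) by (apply (le_INR 1); auto).
    cut (- fxy x1 (INR y) <= - fxy x2 (INR y)). lra.
    eapply (mono (fun x => - fxy x (INR y)) _ x1 x2 hx12).
    + intros x hx. apply (is_derive_opp (fun x => fxy x (INR y))). apply dx; lra.
    + intros x hx. pose proof (key2 x (INR y) ltac:(lra) h1).
      pose proof (spos x (INR y) ltac:(lra) ltac:(lra)).
      rewrite <- Ropp_0. apply Ropp_le_contravar.
      unfold Rdiv.
      match goal with |- ?N * / ?D <= 0 =>
        assert (0 < / D) by (apply Rinv_0_lt_compat; apply pow2_gt_0; apply Rgt_not_eq; apply Rmult_lt_0_compat; lra);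
        assert (N <= 0) by lra end.
      nra.
Qed.
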